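(* Let $d\geq 1$ and let $\rho,\sigma$ be $d\times d$ density matrices. Then \[ \max_{U\in \mathcal{U}(d)} F(\rho, U\sigma U^\dagger) = F\big(\lambda^\downarrow(\rho),\lambda^\downarrow(\sigma)\big)=\sum_{j=1}^d\sqrt{\lambda^\downarrow_j(\rho)\lambda^\downarrow_j(\sigma)}, \] \[ \min_{U\in \mathcal{U}(d)} F(\rho, U\sigma U^\dagger) = F\big(\lambda^\downarrow(\rho),\lambda^\uparrow(\sigma)\big)=\sum_{j=1}^d\sqrt{\lambda^\downarrow_j(\rho)\lambda^\uparrow_j(\sigma)}. \]
   Context: A density matrix is a positive semidefinite complex matrix of trace one. $\mathcal{U}(d)$ denotes the group of $d\times d$ unitary matrices. The (quantum) fidelity of density matrices $\rho,\sigma$ is $F(\rho,\sigma)=\operatorname{Tr}\sqrt{\sqrt{\rho}\,\sigma\sqrt{\rho}}$. For probability vectors $p=(p_j),q=(q_j)$ the classical fidelity is $F(p,q)=\sum_j\sqrt{p_jq_j}$. For a Hermitian matrix $A$, $\lambda^\downarrow(A)=(\lambda^\downarrow_1(A),\dots,\lambda^\downarrow_d(A))$ is the vector of its eigenvalues (with multiplicity) listed in decreasing order and $\lambda^\uparrow(A)$ the same eigenvalues listed in increasing order. *)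

(* Defs.v *)
(* complex numbers are modelled by an arbitrary
   numClosedFieldType C (this includes the complex numbers). *)
From HB Require Import structures.
From mathcomp Require Import all_boot all_order all_algebra.
From Stdlib Require Import ClassicalEpsilon.
Set Implicit Arguments. Unset Strict Implicit. Unset Printing Implicit Defensive.
Import Order.TTheory GRing.Theory Num.Theory.
Local Open Scope ring_scope.
Local Open Scope sesquilinear_scope.

Section Defs.
Variable C : numClosedFieldType.

Definition psdmx n (A : 'M[C]_n) : Prop :=
  A \is hermsymmx /\ forall v : 'cV[C]_n, 0 <= (v ^t* *m A *m v) 0 0.

Definition density n (A : 'M[C]_n) : Prop := psdmx A /\ \tr A = 1.

Definition msqrt n (A : 'M[C]_n) : 'M[C]_n :=
  epsilon (inhabits 0) (fun B : 'M[C]_n => psdmx B /\ B *m B = A).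

Definition fidelity n (rho sigma : 'M[C]_n) : C :=
  \tr (msqrt (msqrt rho *m sigma *m msqrt rho)).

Definition eig_dec n (A : 'M[C]_n) : seq C :=
  epsilon (inhabits [::]) (fun s : seq C =>
    sorted >=%R s /\ char_poly A = \prod_(x <- s) ('X - x%:P)).

Definition eig_inc n (A : 'M[C]_n) : seq C := rev (eig_dec A).

Definition cfidelity (p q : seq C) : C :=
  \sum_(j < size p) sqrtC (p`_j * q`_j).

End Defs.

(* Main.v *)
From HB Require Import structures.
From mathcomp Require Import all_boot all_order all_algebra ring lra.
From mathcomp Require Import fingroup perm.
From Stdlib Require Import ClassicalEpsilon.
Require Import Defs.
Set Implicit Arguments. Unset Strict Implicit. Unset Printing Implicit Defensive.
Import Order.TTheory GRing.Theory Num.Theory.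
Local Open Scope ring_scope.
Local Open Scope sesquilinear_scope.

Section DS.
Variable R : numDomainType.

Lemma eq_le_tmp (x y : R) : x = y -> x <= y.
Proof. by move->. Qed.

Lemma tele_ind (a : nat -> R) n j : (j < n)%N -> a n = 0 ->
  a j = \sum_(p < n) (j <= p)%:R * (a p - a p.+1).
Proof.
move=> jn an0.
rewrite -(big_mkord xpredT (fun p => (j <= p)%:R * (a p - a p.+1))).
rewrite (big_cat_nat (n:=j)) ?(ltnW jn) //= big_nat_cond big1; last first.
  by move=> p /andP[/andP[_ pj] _]; rewrite leqNgt pj mul0r.
rewrite add0r big_nat_cond (eq_bigr (fun p => - (a p.+1 - a p))); last first.
  by move=> p /andP[/andP[jp _] _]; rewrite jp mul1r opprB.
by rewrite -big_nat_cond sumrN telescope_sumr ?(ltnW jn) // an0 sub0r opprK.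
Qed.

Lemma ds_upper (a b : nat -> R) (W : nat -> nat -> R) n :
  (forall i, a i.+1 <= a i) -> (forall i, b i.+1 <= b i) ->
  a n = 0 -> b n = 0 ->
  (forall j k, 0 <= W j k) ->
  (forall j, (j < n)%N -> \sum_(k < n) W j k <= 1) ->
  (forall k, (k < n)%N -> \sum_(j < n) W j k <= 1) ->
  \sum_(j < n) \sum_(k < n) a j * b k * W j k <= \sum_(i < n) a i * b i.
Proof.
move=> da db an bn W0 Wr Wc.
pose D p := a p - a p.+1; pose E q := b q - b q.+1.
have D0 p : 0 <= D p by rewrite subr_ge0.
have E0 q : 0 <= E q by rewrite subr_ge0.
have expand (F : nat -> nat -> R) :
   \sum_(j < n) \sum_(k < n) a j * b k * F j k =
   \sum_(p < n) \sum_(q < n) D p * E q *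
      (\sum_(j < n) \sum_(k < n) (j <= p)%:R * (k <= q)%:R * F j k).
  transitivity (\sum_(j < n) \sum_(k < n) \sum_(p < n) \sum_(q < n)
      D p * E q * ((j <= p)%:R * (k <= q)%:R * F j k)).
    apply: eq_bigr => j _; apply: eq_bigr => k _.
    rewrite (tele_ind (ltn_ord j) an) (tele_ind (ltn_ord k) bn).
    rewrite mulr_suml mulr_suml; apply: eq_bigr => p _.
    rewrite mulr_sumr mulr_suml; apply: eq_bigr => q _.
    by rewrite /D /E; ring.
  transitivity (\sum_(j < n) \sum_(p < n) \sum_(k < n) \sum_(q < n)
      D p * E q * ((j <= p)%:R * (k <= q)%:R * F j k)).
    by apply: eq_bigr => j _; rewrite exchange_big.
  rewrite exchange_big /=; apply: eq_bigr => p _.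
  transitivity (\sum_(j < n) \sum_(q < n) \sum_(k < n)
      D p * E q * ((j <= p)%:R * (k <= q)%:R * F j k)).
    by apply: eq_bigr => j _; rewrite exchange_big.
  rewrite exchange_big /=; apply: eq_bigr => q _.
  rewrite mulr_sumr; apply: eq_bigr => j _.
  by rewrite mulr_sumr.
rewrite expand.
have -> : \sum_(i < n) a i * b i = \sum_(i < n) \sum_(k < n) a i * b k * (i == k)%:R.
  apply: eq_bigr => i _; rewrite (bigD1 i) //= eqxx mulr1 big1 ?addr0 //.
  by move=> k /negPf; rewrite eq_sym => ->; rewrite mulr0.
rewrite (expand (fun j k => (j == k)%:R)); apply: ler_sum => p _; apply: ler_sum => q _.
apply: ler_wpM2l; first by rewrite mulr_ge0.
have key (X : nat -> nat -> R) (p' q' : nat) : (p' <= q')%N -> (forall j k, 0 <= X j k) ->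
    (forall j, (j < n)%N -> \sum_(k < n) X j k <= 1) ->
    \sum_(j < n) \sum_(k < n) (j <= p')%:R * (k <= q')%:R * X j k <=
    \sum_(j < n) \sum_(k < n) (j <= p')%:R * (k <= q')%:R * (j == k)%:R.
  move=> pq X0 Xr; apply: ler_sum => j _.
  have -> : \sum_(k < n) (j <= p')%:R * (k <= q')%:R * (j == k)%:R = (j <= p')%:R :> R.
    rewrite (bigD1 j) //= eqxx mulr1 big1 ?addr0; last first.
      by move=> k /negPf; rewrite eq_sym => ->; rewrite mulr0.
    by case: (leqP j p') => jp; rewrite ?mul0r // (leq_trans jp pq) mulr1.
  case: (leqP j p') => jp; last by rewrite big1 // => k _; rewrite !mul0r.
  apply: le_trans (Xr j (ltn_ord j)); apply: ler_sum => k _; rewrite mul1r.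
  by case: (k <= q')%N; rewrite ?mul1r ?mul0r.
case: (leqP p q) => pq; first exact: key.
have := key (fun j k => W k j) q p (ltnW pq) (fun j k => W0 k j) Wc.
move=> H; rewrite exchange_big [X in _ <= X]exchange_big /=.
under eq_bigr do under eq_bigr do rewrite [X in X * _]mulrC.
under [X in _ <= X]eq_bigr do under eq_bigr do rewrite [X in X * _]mulrC eq_sym.
exact: H.
Qed.

Lemma ds_lower (a b : nat -> R) (W : nat -> nat -> R) n :
  (forall i, a i.+1 <= a i) -> (forall i, b i.+1 <= b i) ->
  a n = 0 -> b n = 0 ->
  (forall j k, 0 <= W j k) ->
  (forall j, (j < n)%N -> \sum_(k < n) W j k = 1) ->
  (forall k, (k < n)%N -> \sum_(j < n) W j k = 1) ->
  \sum_(i < n) a i * b (n - i.+1)%N <= \sum_(j < n) \sum_(k < n) a j * b k * W j k.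
Proof.
move=> da db an bn W0 Wr Wc.
pose c k := if (k < n)%N then b 0%N - b (n - k.+1)%N else 0.
pose W' j k := W j (n - k.+1)%N.
have rev_sum (F : nat -> R) : \sum_(k < n) F (n - k.+1)%N = \sum_(k < n) F k.
  by rewrite (reindex_inj rev_ord_inj) /=; apply: eq_bigr => k _; rewrite subnSK // subKn // ltnW.
have dc i : c i.+1 <= c i.
  rewrite /c; case: (ltnP i.+1 n) => h1.
    rewrite (ltnW h1) lerD2l lerN2.
    have -> : (n - i.+1 = (n - i.+2).+1)%N by rewrite subnSK.
    exact: db.
  case: (ltnP i n) => h2 //.
  have -> : i.+1 = n by apply/eqP; rewrite eqn_leq h1 h2.
  by rewrite subnn subrr.
have cn : c n = 0 by rewrite /c ltnn.
have Wr' j : (j < n)%N -> \sum_(k < n) W' j k = 1 by move=> jn; rewrite /W' rev_sum Wr.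
have Wc' k : (k < n)%N -> \sum_(j < n) W' j k = 1.
  by move=> kn; rewrite /W' Wc // subnSK // leq_subr.
have := ds_upper da dc an cn (W := W') (fun j k => W0 _ _)
   (fun j jn => eq_le_tmp (Wr' j jn)) (fun k kn => eq_le_tmp (Wc' k kn)).
have -> : \sum_(j < n) \sum_(k < n) a j * c k * W' j k =
    b 0%N * \sum_(j < n) a j - \sum_(j < n) \sum_(k < n) a j * b k * W j k.
  rewrite mulr_sumr -sumrB; apply: eq_bigr => j _.
  transitivity (\sum_(k < n) (a j * b 0%N * W j (n - k.+1)%N -
       a j * b (n - k.+1)%N * W j (n - k.+1)%N)).
    by apply: eq_bigr => k _; rewrite /c ltn_ord /W'; ring.
  rewrite sumrB -mulr_sumr (rev_sum (W j)) Wr // mulr1 mulrC.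
  by rewrite (rev_sum (fun k => a j * b k * W j k)).
have -> : \sum_(i < n) a i * c i = b 0%N * \sum_(i < n) a i - \sum_(i < n) a i * b (n - i.+1)%N.
  rewrite mulr_sumr -sumrB; apply: eq_bigr => i _; rewrite /c ltn_ord; ring.
by rewrite lerD2l lerN2.
Qed.
End DS.


Section Mx.
Variable C : numClosedFieldType.

Lemma adjM m n p (A : 'M[C]_(m, n)) (B : 'M[C]_(n, p)) :
  (A *m B) ^t* = B ^t* *m A ^t*.
Proof. by rewrite trmx_mul map_mxM. Qed.

Lemma unitary_tC n (P : 'M[C]_n) : P \is unitarymx -> P ^t* *m P = 1%:M.
Proof. by move=> Pu; have := mulmxKtV (1%:M : 'M[C]_n) Pu erefl; rewrite mul1mx. Qed.

Lemma unitary_adj n (P : 'M[C]_n) : P \is unitarymx -> P ^t* \is unitarymx.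
Proof. by rewrite trmxC_unitary. Qed.

Lemma adj_diag n (s : 'rV[C]_n) : s \is a realmx -> (diag_mx s) ^t* = diag_mx s.
Proof.
move=> sr; rewrite tr_diag_mx map_diag_mx; congr diag_mx.
by apply/rowP => i; rewrite !mxE; apply/CrealP/(mxOverP sr).
Qed.

Lemma herm_adj n (A : 'M[C]_n) : A \is hermsymmx -> A ^t* = A.
Proof. by move=> /is_hermitianmxP; rewrite expr0 scale1r => <-. Qed.

Lemma herm_spec n (A : 'M[C]_n) : A \is hermsymmx ->
  exists (P : 'M[C]_n) (s : 'rV[C]_n), [/\ P \is unitarymx, s \is a realmx & A = P ^t* *m diag_mx s *m P].
Proof.
move=> Ah; exists (spectralmx A), (spectral_diag A); split.
- exact: spectral_unitarymx.
- exact: hermitian_spectral_diag_real.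
- rewrite -(invmx_unitary (spectral_unitarymx A)).
  exact/orthomx_spectralP/hermitian_normalmx.
Qed.

Lemma quad_spec n (P : 'M[C]_n) (s : 'rV[C]_n) (v : 'cV[C]_n) :
  (v ^t* *m (P ^t* *m diag_mx s *m P) *m v) 0 0 =
  \sum_i s 0 i * ((P *m v) i 0)^* * (P *m v) i 0.
Proof.
rewrite !mulmxA -adjM -!mulmxA mxE; apply: eq_bigr => i _.
rewrite mul_diag_mx !mxE; ring.
Qed.

Lemma diag_mul n (d e : 'rV[C]_n) :
  diag_mx d *m diag_mx e = diag_mx (\row_i (d 0 i * e 0 i)).
Proof.
apply/matrixP => i j; rewrite mul_diag_mx !mxE.
by case: (i =P j) => [->|_]; rewrite ?mulr1n ?mulr0n ?mulr0.
Qed.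

Lemma nneg_real n (s : 'rV[C]_n) : (forall i, 0 <= s 0 i) -> s \is a realmx.
Proof. by move=> s0; apply/mxOverP => i j; rewrite ord1; apply: ger0_real. Qed.

Definition spec_of n (A P : 'M[C]_n) (s : 'rV[C]_n) :=
  [/\ P \is unitarymx, forall i, 0 <= s 0 i & A = P ^t* *m diag_mx s *m P].

Lemma mulU_delta n (P : 'M[C]_n) i : P \is unitarymx ->
  P *m (P ^t* *m delta_mx i (0 : 'I_1)) = delta_mx i 0.
Proof. by move=> Pu; rewrite mulmxA (unitarymxP Pu) mul1mx. Qed.

Lemma psd_spec n (A : 'M[C]_n) : psdmx A -> exists P s, spec_of A P s.
Proof.
move=> [Ah Aq]; have [P [s [Pu sr AE]]] := herm_spec Ah.
exists P, s; split => // i.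
have := Aq (P ^t* *m delta_mx i 0); rewrite AE quad_spec mulU_delta //.
rewrite (bigD1 i) //= big1 ?addr0; last first.
  by move=> j /negPf ji; rewrite !mxE ji /= mulr0.
by rewrite !mxE !eqxx /= conjC1 !mulr1.
Qed.

Lemma spec_psd n (P : 'M[C]_n) (s : 'rV[C]_n) : P \is unitarymx -> (forall i, 0 <= s 0 i) ->
  psdmx (P ^t* *m diag_mx s *m P).
Proof.
move=> Pu s0; split.
  apply/is_hermitianmxP; rewrite expr0 scale1r !adjM trmxCK adj_diag ?nneg_real //.
  by rewrite mulmxA.
move=> v; rewrite quad_spec; apply: sumr_ge0 => i _.
by rewrite -mulrA mulr_ge0 // mulrC mul_conjC_ge0.
Qed.

Lemma psd_zero n (B : 'M[C]_n) (v : 'cV[C]_n) : psdmx B ->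
  (v ^t* *m B *m v) 0 0 = 0 -> B *m v = 0.
Proof.
move=> /psd_spec [P [s [Pu s0 BE]]]; rewrite BE quad_spec => /eqP.
rewrite psumr_eq0; last by move=> i _; rewrite -mulrA mulr_ge0 // mulrC mul_conjC_ge0.
move=> /allP H; rewrite -!mulmxA.
suff -> : diag_mx s *m (P *m v) = 0 by rewrite !mulmx0.
apply/matrixP => i j; rewrite ord1 mul_diag_mx [LHS]mxE [RHS]mxE.
have := H i (mem_index_enum _).
rewrite -mulrA mulf_eq0 => /orP[/eqP->|]; first by rewrite mul0r.
by rewrite mulrC mul_conjC_eq0 => /eqP ->; rewrite mulr0.
Qed.

Lemma herm_sub n (A B : 'M[C]_n) : A \is hermsymmx -> B \is hermsymmx -> A - B \is hermsymmx.
Proof.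
move=> Ah Bh; apply/is_hermitianmxP; rewrite expr0 scale1r.
by rewrite linearB /= map_mxB herm_adj // herm_adj.
Qed.

Lemma adjZ m n (a : C) (A : 'M[C]_(m, n)) : (a *: A) ^t* = a^* *: A ^t*.
Proof. by rewrite linearZ /= map_mxZ. Qed.

Lemma diag_delta n (x : 'rV[C]_n) i :
  diag_mx x *m delta_mx i (0 : 'I_1) = x 0 i *: delta_mx i 0.
Proof.
apply/matrixP => k j; rewrite mul_diag_mx !mxE.
by case: (k =P i) => [->|_]; rewrite ?mulr1 ?mulr0 //= andbF mulr0.
Qed.

Lemma sqrt_unique n (B T : 'M[C]_n) : psdmx B -> psdmx T -> B *m B = T *m T -> B = T.
Proof.
move=> Bp Tp BT; have [Bh _] := Bp; have [Th _] := Tp.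
have Xh := herm_sub Bh Th.
have [Q [x [Qu xr XE]]] := herm_spec Xh.
suff x0 : x = 0.
  have d0 : diag_mx (0 : 'rV[C]_n) = 0 by apply/matrixP => a b; rewrite !mxE mul0rn.
  by apply/eqP; rewrite -subr_eq0 XE x0 d0 mulmx0 mul0mx.
apply/rowP => i; rewrite mxE.
set v := Q ^t* *m delta_mx i (0 : 'I_1).
have Xv : (B - T) *m v = x 0 i *: v.
  by rewrite XE -mulmxA mulU_delta // -mulmxA diag_delta scalemxAr.
have xi_r : (x 0 i)^* = x 0 i by apply/CrealP/(mxOverP xr).
have vX : v ^t* *m (B - T) = x 0 i *: v ^t*.
  by rewrite -[B - T](herm_adj Xh) -adjM Xv adjZ xi_r.
have E : B *m B - T *m T = B *m (B - T) + (B - T) *m T.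
  by rewrite mulmxBr mulmxBl addrA subrK.
have E0 : v ^t* *m (B *m B - T *m T) *m v = 0 by rewrite BT subrr mulmx0 mul0mx.
have t1 : v ^t* *m (B *m (B - T)) *m v = x 0 i *: (v ^t* *m B *m v).
  by rewrite -!mulmxA Xv -!scalemxAr.
have t2 : v ^t* *m ((B - T) *m T) *m v = x 0 i *: (v ^t* *m T *m v).
  by rewrite !mulmxA vX -!scalemxAl.
move: E0; rewrite E mulmxDr mulmxDl t1 t2 -scalerDr.
have qB := (proj2 Bp) v; have qT := (proj2 Tp) v.
move: qB qT; set bB := v ^t* *m B *m v; set tT := v ^t* *m T *m v => qB qT.
move=> /matrixP/(_ 0 0).
rewrite [LHS]mxE [X in _ * X]mxE [RHS]mxE => /eqP; rewrite mulf_eq0 => /orP[/eqP//|].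
rewrite paddr_eq0 // => /andP[/eqP hB /eqP hT].
have Bv := psd_zero Bp hB; have Tv := psd_zero Tp hT.
move: Xv; rewrite mulmxBl Bv Tv subrr => /esym/eqP; rewrite scaler_eq0 => /orP[/eqP//|].
move=> /eqP v0; have := mulU_delta i Qu; rewrite -/v v0 mulmx0 => /matrixP/(_ i 0).
by rewrite !mxE !eqxx => /eqP; rewrite eq_sym oner_eq0.
Qed.

Definition sqrt_row n (s : 'rV[C]_n) := \row_i sqrtC (s 0 i).

Lemma spec_sq n (P : 'M[C]_n) (s : 'rV[C]_n) : P \is unitarymx ->
  P ^t* *m diag_mx s *m P *m (P ^t* *m diag_mx s *m P) =
  P ^t* *m diag_mx (\row_i (s 0 i * s 0 i)) *m P.
Proof.
move=> Pu; rewrite -!mulmxA; congr (_ *m _).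
by rewrite [P *m _]mulmxA (unitarymxP Pu) mul1mx mulmxA diag_mul.
Qed.

Lemma msqrt_spec n (A P : 'M[C]_n) (s : 'rV[C]_n) : spec_of A P s ->
  msqrt A = P ^t* *m diag_mx (sqrt_row s) *m P.
Proof.
move=> [Pu s0 AE].
set T := P ^t* *m diag_mx (sqrt_row s) *m P.
have Tp : psdmx T by apply: spec_psd => // i; rewrite mxE sqrtC_ge0.
have TT : T *m T = A.
  rewrite spec_sq // AE; congr (_ *m _ *m _); congr diag_mx.
  by apply/rowP => i; rewrite !mxE -expr2 sqrtCK.
rewrite /msqrt.
have [Bp BB] := epsilon_spec (inhabits 0) (fun B : 'M[C]_n => psdmx B /\ B *m B = A)
  (ex_intro _ T (conj Tp TT)).
by apply: sqrt_unique => //; rewrite BB TT.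
Qed.

Lemma msqrt_psd n (A : 'M[C]_n) : psdmx A -> psdmx (msqrt A).
Proof.
move=> /psd_spec [P [s sp]]; rewrite (msqrt_spec sp); case: sp => Pu s0 _.
by apply: spec_psd => // i; rewrite mxE sqrtC_ge0.
Qed.

Lemma perm_unitary n (p : 'S_n) : (perm_mx p : 'M[C]_n) \is unitarymx.
Proof.
apply/unitarymxP; rewrite /= tr_perm_mx map_perm_mx -perm_mxM mulgV perm_mx1 //.
Qed.

Lemma perm_diag n (p : 'S_n) (s : 'rV[C]_n) :
  perm_mx p *m diag_mx s *m (perm_mx p) ^t* = diag_mx (\row_i s 0 (p i)).
Proof.
rewrite tr_perm_mx map_perm_mx -row_permE -[in perm_mx p^-1](invgK p) -col_permE.
apply/matrixP => i j; rewrite !mxE invgK (inj_eq perm_inj).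
by case: (i =P j) => [->|]; rewrite ?mulr1n ?mulr0n.
Qed.

Lemma spec_perm n (A P : 'M[C]_n) (s : 'rV[C]_n) (p : 'S_n) : spec_of A P s ->
  spec_of A (perm_mx p *m P) (\row_i s 0 (p i)).
Proof.
move=> [Pu s0 AE]; split.
- exact: mul_unitarymx (perm_unitary p) Pu.
- by move=> i; rewrite mxE.
rewrite -perm_diag adjM AE !mulmxA; congr (_ *m _).
rewrite -!mulmxA; congr (_ *m _); rewrite !mulmxA.
rewrite (unitary_tC (perm_unitary p)) mul1mx -mulmxA (unitary_tC (perm_unitary p)).
by rewrite mulmx1.
Qed.

Definition rle (x y : C) := 'Re y <= 'Re x.

Lemma sort_spec n (A P : 'M[C]_n) (s : 'rV[C]_n) : spec_of A P s ->
  exists P' (s' : 'rV[C]_n), spec_of A P' s' /\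
     (forall i j : 'I_n, (i <= j)%N -> s' 0 j <= s' 0 i).
Proof.
move=> sp; set t := [tuple s 0 i | i < n].
have rtot : total rle by move=> x y; rewrite /rle orbC; apply: real_leVge; apply: Creal_Re.
have rtr : transitive rle by move=> x y z; rewrite /rle => h1 h2; apply: le_trans h2 h1.
have /tuple_permP [p pE] : perm_eq (sort rle t) t by rewrite perm_sort.
exists (perm_mx p *m P), (\row_i s 0 (p i)); split; first exact: spec_perm.
move=> i j ij; rewrite !mxE.
have st := sort_sorted rtot t.
have := sorted_leq_nth rtr (fun x => lexx _) 0 st.
rewrite size_sort size_tuple => /(_ i j (ltn_ord i) (ltn_ord j) ij).
rewrite pE !nth_mktuple !tnth_mktuple.
case: sp => _ s0 _; rewrite /rle.
have Re_r (x : C) : 0 <= x -> 'Re x = x by move=> x0; apply/Creal_ReP/ger0_real.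
by rewrite !Re_r.
Qed.

Lemma char_poly_conj n (Q P D : 'M[C]_n) : Q *m P = 1%:M ->
  char_poly (Q *m D *m P) = char_poly D.
Proof.
move=> QP; rewrite /char_poly /char_poly_mx.
have XE : ('X%:M : 'M[{poly C}]_n) = map_mx polyC Q *m 'X%:M *m map_mx polyC P.
  rewrite mul_mx_scalar -scalemxAl -map_mxM QP map_mx1.
  by rewrite scalemx1.
rewrite [X in X - _]XE !map_mxM -mulmxBl -mulmxBr !det_mulmx mulrC mulrA.
by rewrite [X in X * _]mulrC -det_mulmx -map_mxM QP map_mx1 det1 mul1r.
Qed.

Definition rowseq n (s : 'rV[C]_n) := [seq s 0 i | i <- enum 'I_n].

Lemma rowseq_nth n (s : 'rV[C]_n) (i : 'I_n) : (rowseq s)`_i = s 0 i.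
Proof. by rewrite /rowseq (nth_map i) ?size_enum_ord // nth_ord_enum. Qed.

Lemma size_rowseq n (s : 'rV[C]_n) : size (rowseq s) = n.
Proof. by rewrite size_map size_enum_ord. Qed.

Lemma eig_dec_spec n (A P : 'M[C]_n) (s : 'rV[C]_n) : spec_of A P s ->
  (forall i j : 'I_n, (i <= j)%N -> s 0 j <= s 0 i) ->
  eig_dec A = rowseq s.
Proof.
move=> [Pu s0 AE] sdec.
have hc : char_poly A = \prod_(x <- rowseq s) ('X - x%:P).
  rewrite AE char_poly_conj ?unitary_tC // char_poly_trig ?diag_mx_is_trig //.
  rewrite big_map big_enum /=; apply: eq_bigr => i _; rewrite mxE eqxx mulr1n //.
have hs : sorted >=%R (rowseq s).
  rewrite /rowseq sorted_map.
  have : sorted (relpre val ltn) (enum 'I_n) by rewrite -sorted_map val_enum_ord iota_ltn_sorted.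
  apply: sub_sorted => i j /= ij; exact: sdec (ltnW ij).
rewrite /eig_dec.
have [es ec] := epsilon_spec (inhabits [::]) (fun e : seq C =>
    sorted >=%R e /\ char_poly A = \prod_(x <- e) ('X - x%:P))
  (ex_intro _ (rowseq s) (conj hs hc)).
apply: sorted_eq es hs _.
- by move=> y x z /= h1 h2; apply: le_trans h2 h1.
- by move=> x y /= /andP[h1 h2]; apply/le_anti; rewrite h1 h2.
- by apply: prod_XsubC_eq; rewrite -ec -hc.
Qed.

End Mx.


Section S.
Variable C : numClosedFieldType.

Lemma amgm (u v s : C) : 0 <= u -> 0 <= v -> 0 <= s ->
  s * (2%:R * (u * v)) <= u ^+ 2 + s ^+ 2 * v ^+ 2.
Proof.
move=> u0 v0 s0.
have : 0 <= (u - s * v) ^+ 2.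
  apply: real_exprn_even_ge0 => //; apply: rpredB; apply: ger0_real => //; exact: mulr_ge0.
have -> : (u - s * v) ^+ 2 = u ^+ 2 + s ^+ 2 * v ^+ 2 - s * (2%:R * (u * v)) by ring.
by rewrite subr_ge0.
Qed.

Lemma cs_bound n (x y : 'I_n -> C) (s : C) : 0 <= s ->
  \sum_k `|x k| ^+ 2 = s ^+ 2 -> \sum_k `|y k| ^+ 2 <= 1 ->
  \sum_k `|x k| * `|y k| <= s.
Proof.
move=> s0 hx hy; case: (s =P 0) => [sz|snz].
  move: hx; rewrite sz expr0n /= => /eqP; rewrite psumr_eq0 => [/allP hx|k _]; last first.
    exact: exprn_ge0.
  rewrite big1 // => k _; have := hx k (mem_index_enum _).
  by rewrite expf_eq0 /= => /eqP ->; rewrite mul0r.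
have sp : 0 < s by rewrite lt_def s0 andbT; apply/eqP.
have two0 : 0 < 2%:R :> C by rewrite ltr0n.
rewrite -(ler_pM2l sp) -(ler_pM2l two0) mulrCA !mulr_sumr.
apply: (@le_trans _ _ (\sum_k (`|x k| ^+ 2 + s ^+ 2 * `|y k| ^+ 2))).
  by apply: ler_sum => k _; apply: amgm.

rewrite big_split /= hx -mulr_sumr.
have : s ^+ 2 * \sum_k `|y k| ^+ 2 <= s ^+ 2 by rewrite ler_piMr // exprn_ge0.
move=> h; apply: le_trans (lerD (lexx _) h) _.
by rewrite -expr2 -mulr2n mulr_natl.
Qed.

End S.


Section Core.
Variable C : numClosedFieldType.

Lemma mmt_diag m n (M : 'M[C]_(m, n)) i : (M *m M ^t*) i i = \sum_k `|M i k| ^+ 2.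
Proof. by rewrite mxE; apply: eq_bigr => k _; rewrite !mxE normCK. Qed.

Lemma mtm_diag m n (M : 'M[C]_(m, n)) j : (M ^t* *m M) j j = \sum_k `|M k j| ^+ 2.
Proof. by rewrite mxE; apply: eq_bigr => k _; rewrite !mxE normCK mulrC. Qed.

Lemma unitary_row_sum n (M : 'M[C]_n) i : M \is unitarymx -> \sum_k `|M i k| ^+ 2 = 1.
Proof. by move=> Mu; rewrite -mmt_diag (unitarymxP Mu) mxE eqxx. Qed.

Lemma unitary_col_sum n (M : 'M[C]_n) j : M \is unitarymx -> \sum_k `|M k j| ^+ 2 = 1.
Proof. by move=> Mu; rewrite -mtm_diag (unitary_tC Mu) mxE eqxx. Qed.

Lemma trace_bound n (L Q : 'M[C]_n) (s : 'rV[C]_n) :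
  (forall i, 0 <= s 0 i) -> L *m L ^t* = diag_mx (\row_i (s 0 i * s 0 i)) ->
  (forall i, \sum_k `|Q k i| ^+ 2 <= 1) ->
  `|\tr (L *m Q)| <= \sum_i s 0 i.
Proof.
move=> s0 LL Qc; rewrite /mxtrace; apply: le_trans (ler_norm_sum _ _ _) _.
apply: ler_sum => i _; rewrite mxE; apply: le_trans (ler_norm_sum _ _ _) _.
under eq_bigr do rewrite normrM.
apply: cs_bound => //; rewrite -mmt_diag LL !mxE eqxx mulr1n expr2 //.
Qed.

Lemma core_lower n (G Z : 'M[C]_n) (a b s : 'rV[C]_n) :
  G \is unitarymx -> Z \is unitarymx ->
  (forall i, 0 <= a 0 i) -> (forall i, 0 <= b 0 i) -> (forall i, 0 <= s 0 i) ->
  (G *m diag_mx a *m Z *m diag_mx b) *m (G *m diag_mx a *m Z *m diag_mx b) ^t*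
     = diag_mx (\row_i (s 0 i * s 0 i)) ->
  \sum_j \sum_k a 0 j * b 0 k * `|Z j k| ^+ 2 <= \sum_i s 0 i.
Proof.
move=> Gu Zu a0 b0 s0 LL.
set L := G *m diag_mx a *m Z *m diag_mx b in LL.
have Qu : Z ^t* *m G ^t* \is unitarymx by apply: mul_unitarymx; rewrite unitary_adj.
have hT : \tr (L *m (Z ^t* *m G ^t*)) = \sum_j \sum_k a 0 j * b 0 k * `|Z j k| ^+ 2.
  rewrite /L -!mulmxA mxtrace_mulC -!mulmxA (unitary_tC Gu) mulmx1.
  rewrite /mxtrace; apply: eq_bigr => j _.
  rewrite mul_diag_mx mxE mxE mulr_sumr; apply: eq_bigr => k _.
  rewrite mul_diag_mx !mxE normCK; ring.
have Tge0 : 0 <= \sum_j \sum_k a 0 j * b 0 k * `|Z j k| ^+ 2.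
  by apply: sumr_ge0 => j _; apply: sumr_ge0 => k _; rewrite !mulr_ge0 ?exprn_ge0.
rewrite -(ger0_norm Tge0) -hT; apply: trace_bound => // i.
by rewrite unitary_col_sum.
Qed.

Lemma le1_of_sq (e : C) : 0 <= e -> e ^+ 2 <= e -> e <= 1.
Proof.
move=> e0; case: (e =P 0) => [->|ez]; first by rewrite ler01.
have ep : 0 < e by rewrite lt_def e0 andbT; apply/eqP.
by move=> h; rewrite -(ler_pM2l ep) mulr1 -expr2.
Qed.

Lemma core_upper n (G Z : 'M[C]_n) (a b s : 'rV[C]_n) :
  G \is unitarymx -> Z \is unitarymx ->
  (forall i, 0 <= a 0 i) -> (forall i, 0 <= b 0 i) -> (forall i, 0 <= s 0 i) ->
  (G *m diag_mx a *m Z *m diag_mx b) *m (G *m diag_mx a *m Z *m diag_mx b) ^t*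
     = diag_mx (\row_i (s 0 i * s 0 i)) ->
  exists W : 'I_n -> 'I_n -> C,
    [/\ forall j k, 0 <= W j k, forall j, \sum_k W j k <= 1,
        forall k, \sum_j W j k <= 1 &
        \sum_i s 0 i <= \sum_j \sum_k a 0 j * b 0 k * W j k].
Proof.
move=> Gu Zu a0 b0 s0 LL.
set L := G *m diag_mx a *m Z *m diag_mx b in LL.
set Di := diag_mx (\row_i (s 0 i)^-1).
have Dih : Di ^t* = Di.
  apply: adj_diag; apply/mxOverP => i j; rewrite !mxE; apply: ger0_real.
  by rewrite invr_ge0.
have [Om OmE] : {Om | Om = Di *m L} by exists (Di *m L).
have [R RE] : {R | R = Om ^t* *m G} by exists (Om ^t* *m G).
set p := \row_i (s 0 i * s 0 i * (s 0 i)^-1 * (s 0 i)^-1).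
have pE i : p 0 i = if s 0 i == 0 then 0 else 1.
  rewrite mxE; case: eqP => [->|h]; first by rewrite !mul0r.
  by rewrite mulfK ?divff //; apply/eqP.
have OO : Om *m Om ^t* = diag_mx p.
  rewrite OmE adjM Dih -mulmxA [L *m _]mulmxA LL !diag_mul; congr diag_mx.
  by apply/rowP => i; rewrite !mxE; ring.
have pOm : diag_mx p *m Om = Om.
  rewrite OmE mulmxA diag_mul; congr (_ *m _); congr diag_mx; apply/rowP => i.
  rewrite !mxE; case: (s 0 i =P 0) => [->|h]; first by rewrite invr0 mulr0.
  by rewrite mulfK ?divff ?mul1r //; apply/eqP.
pose W j k := (`|Z j k| ^+ 2 + `|R k j| ^+ 2) / 2%:R.
have two0 : (0 : C) < 2%:R by rewrite ltr0n.
have hsum (f g : 'I_n -> C) : \sum_k (f k + g k) / 2%:R = (\sum_k f k + \sum_k g k) / 2%:R.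
  by rewrite -mulr_suml big_split.
have half (x y : C) : x <= 1 -> y <= 1 -> (x + y) / 2%:R <= 1.
  move=> hx hy; rewrite ler_pdivrMr // mul1r; apply: le_trans (lerD hx hy) _.
  by rewrite -(natrD C 1 1).
exists W; split.
- by move=> j k; rewrite /W divr_ge0 ?(ltW two0) // addr_ge0 ?exprn_ge0.
- move=> j; rewrite /W hsum unitary_row_sum //; apply: half => //.
  rewrite -mtm_diag RE adjM trmxCK -mulmxA [Om *m _]mulmxA OO mxE.
  rewrite (@le_trans _ _ (\sum_i `|G i j| ^+ 2)) //; last by rewrite unitary_col_sum.
  apply: ler_sum => i _; rewrite mxE mul_diag_mx [in X in _ * X]mxE pE.
  rewrite [G^T _ _]mxE normCK.
  case: eqP => _; rewrite ?mul0r ?mulr0 ?mul1r ?mul_conjC_ge0 // mulrC lexx //.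
- move=> k; rewrite /W hsum unitary_col_sum //; apply: half => //.
  have -> : \sum_j `|R k j| ^+ 2 = (Om ^t* *m Om) k k.
    by rewrite -mmt_diag RE adjM trmxCK -mulmxA [G *m _]mulmxA (unitarymxP Gu) mul1mx.
  have [E EE] : {E | E = Om ^t* *m Om} by exists (Om ^t* *m Om).
  rewrite -EE.
  have E2 : E *m E = E by rewrite EE -mulmxA [Om *m _]mulmxA OO pOm.
  have Eh : E ^t* = E by rewrite EE adjM trmxCK.
  have E0 : 0 <= E k k by rewrite EE mtm_diag sumr_ge0 // => i _; rewrite exprn_ge0.
  apply: le1_of_sq => //.
  have Ekk : E k k = \sum_l `|E k l| ^+ 2.
    rewrite -{1}E2 mxE; apply: eq_bigr => l _.
    by rewrite -{2}Eh !mxE normCK.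
  rewrite [X in _ <= X]Ekk (bigD1 k) //= ger0_norm // lerDl sumr_ge0 // => l _.
  by rewrite exprn_ge0.
have S1 : \sum_i s 0 i = \tr (L *m Om ^t*).
  rewrite OmE adjM Dih mulmxA LL diag_mul mxtrace_diag; apply: eq_bigr => i _.
  rewrite !mxE; case: (s 0 i =P 0) => [->|h]; first by rewrite !mul0r.
  by rewrite mulfK //; apply/eqP.
have S2 : \tr (L *m Om ^t*) = \sum_j \sum_k a 0 j * b 0 k * (Z j k * R k j).
  rewrite /L -!mulmxA mxtrace_mulC -!mulmxA -RE /mxtrace; apply: eq_bigr => j _.
  rewrite mul_diag_mx mxE mxE mulr_sumr; apply: eq_bigr => k _.
  by rewrite mul_diag_mx !mxE; ring.
have Sge0 : 0 <= \sum_i s 0 i by apply: sumr_ge0.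
rewrite -(ger0_norm Sge0) S1 S2; apply: le_trans (ler_norm_sum _ _ _) _.
apply: ler_sum => j _; apply: le_trans (ler_norm_sum _ _ _) _.
apply: ler_sum => k _; rewrite normrM (ger0_norm (mulr_ge0 (a0 j) (b0 k))).
apply: ler_wpM2l; first exact: mulr_ge0.
rewrite /W ler_pdivlMr // normrM.
have := amgm (normr_ge0 (Z j k)) (normr_ge0 (R k j)) ler01.
by rewrite mul1r expr1n mul1r mulrC.
Qed.

End Core.


Section Red.
Variable C : numClosedFieldType.

Lemma psd_mmt m n (K : 'M[C]_(m, n)) : psdmx (K *m K ^t*).
Proof.
split.
  by apply/is_hermitianmxP; rewrite expr0 scale1r adjM trmxCK.
move=> v; have -> : v ^t* *m (K *m K ^t*) *m v = (K ^t* *m v) ^t* *m (K ^t* *m v).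
  by rewrite adjM trmxCK !mulmxA.
rewrite mxE; apply: sumr_ge0 => k _; rewrite !mxE mulrC mul_conjC_ge0 //.
Qed.

Lemma msqrt_sq n (A : 'M[C]_n) : psdmx A -> msqrt A *m msqrt A = A.
Proof.
move=> /psd_spec [P [s sp]]; rewrite (msqrt_spec sp); case: sp => Pu s0 ->.
rewrite spec_sq //; congr (_ *m _ *m _); congr diag_mx; apply/rowP => i.
by rewrite !mxE -expr2 sqrtCK.
Qed.

Lemma spec_herm n (A P : 'M[C]_n) (s : 'rV[C]_n) : spec_of A P s -> A ^t* = A.
Proof.
move=> [Pu s0 ->]; rewrite !adjM trmxCK adj_diag ?mulmxA //.
exact: nneg_real.
Qed.

Lemma trace_spec n (A P : 'M[C]_n) (s : 'rV[C]_n) : spec_of A P s -> \tr A = \sum_i s 0 i.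
Proof.
by move=> [Pu s0 ->]; rewrite mxtrace_mulC mulmxA (unitarymxP Pu) mul1mx mxtrace_diag.
Qed.

Lemma fid_reduce n (rho sigma U X Y0 : 'M[C]_n) (lam mu : 'rV[C]_n) :
  spec_of rho X lam -> spec_of sigma Y0 mu -> U \is unitarymx ->
  exists (G Z : 'M[C]_n) (s : 'rV[C]_n),
   [/\ G \is unitarymx, Z \is unitarymx, forall i, 0 <= s 0 i,
       fidelity rho (U *m sigma *m U ^t*) = \sum_i s 0 i &
       (G *m diag_mx (sqrt_row lam) *m Z *m diag_mx (sqrt_row mu)) *m
       (G *m diag_mx (sqrt_row lam) *m Z *m diag_mx (sqrt_row mu)) ^t*
         = diag_mx (\row_i (s 0 i * s 0 i))].
Proof.
move=> sr ss Uu.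
have sqr := msqrt_spec sr.
case: (sr) => Xu lam0 rE; case: (ss) => Y0u mu0 sE.
set a := sqrt_row lam; set b := sqrt_row mu.
set Y := Y0 *m U ^t*.
have Yu : Y \is unitarymx by apply: mul_unitarymx => //; rewrite unitary_adj.
have sig' : U *m sigma *m U ^t* = Y ^t* *m diag_mx mu *m Y.
  by rewrite sE /Y adjM trmxCK !mulmxA.
set K := msqrt rho *m Y ^t* *m diag_mx b.
have Ra : msqrt rho = X ^t* *m diag_mx a *m X by [].
have bb : diag_mx b *m (diag_mx b) ^t* = diag_mx mu.
  rewrite adj_diag; last by apply: nneg_real => i; rewrite mxE sqrtC_ge0.
  rewrite diag_mul; congr diag_mx; apply/rowP => i; rewrite !mxE -expr2 sqrtCK //.
have herR : (msqrt rho) ^t* = msqrt rho.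
  apply: (spec_herm (P := X) (s := a)); split => //; first by move=> i; rewrite mxE sqrtC_ge0.
have MK : msqrt rho *m (U *m sigma *m U ^t*) *m msqrt rho = K *m K ^t*.
  rewrite sig' /K !adjM trmxCK herR !mulmxA; congr (_ *m _).
  by rewrite -!mulmxA trmxCK [diag_mx b *m _]mulmxA bb.
have Mp := psd_mmt K.
rewrite -MK in Mp.
have [V [s sV]] := psd_spec (msqrt_psd Mp).
have S2 := msqrt_sq Mp.
case: (sV) => Vu s0 SE.
exists (V *m X ^t*), (X *m Y ^t*), s; split => //.
- by apply: mul_unitarymx => //; rewrite unitary_adj.
- by apply: mul_unitarymx => //; rewrite unitary_adj.
- by rewrite /fidelity (trace_spec sV).
have : V *m (K *m K ^t*) *m V ^t* = diag_mx (\row_i (s 0 i * s 0 i)).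
  rewrite -MK -S2 SE spec_sq // !mulmxA (unitarymxP Vu) mul1mx -mulmxA (unitarymxP Vu).
  by rewrite mulmx1.
have GK : V *m X ^t* *m diag_mx a *m (X *m Y ^t*) *m diag_mx b = V *m K.
  by rewrite /K Ra !mulmxA.
by move=> <-; rewrite GK adjM !mulmxA.
Qed.

End Red.


Section Fin.
Variable C : numClosedFieldType.

Definition natf n (a : 'rV[C]_n) (k : nat) : C := (rowseq a)`_k.

Lemma natf_ord n (a : 'rV[C]_n) (i : 'I_n) : natf a i = a 0 i.
Proof. exact: rowseq_nth. Qed.

Lemma natf_out n (a : 'rV[C]_n) k : (n <= k)%N -> natf a k = 0.
Proof. by move=> nk; rewrite /natf nth_default // size_rowseq. Qed.

Lemma natf_dec n (a : 'rV[C]_n) : (forall i, 0 <= a 0 i) ->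
  (forall i j : 'I_n, (i <= j)%N -> a 0 j <= a 0 i) ->
  forall k, natf a k.+1 <= natf a k.
Proof.
move=> a0 ad k; case: (ltnP k.+1 n) => h1.
  have h2 : (k < n)%N by apply: ltnW.
  rewrite -[k]/(val (Ordinal h2)) -[k.+1]/(val (Ordinal h1)) !natf_ord.
  by apply: ad => /=.
rewrite natf_out //; case: (ltnP k n) => h2; last by rewrite natf_out.
by rewrite -[k]/(val (Ordinal h2)) natf_ord.
Qed.

Definition natW n (W : 'I_n -> 'I_n -> C) (j k : nat) : C :=
  match insub j, insub k with Some j', Some k' => W j' k' | _, _ => 0 end.

Lemma natW_ord n (W : 'I_n -> 'I_n -> C) (j k : 'I_n) : natW W j k = W j k.
Proof. by rewrite /natW !valK. Qed.

Lemma ds_upper_ord n (a b : 'rV[C]_n) (W : 'I_n -> 'I_n -> C) :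
  (forall i, 0 <= a 0 i) -> (forall i, 0 <= b 0 i) ->
  (forall i j : 'I_n, (i <= j)%N -> a 0 j <= a 0 i) ->
  (forall i j : 'I_n, (i <= j)%N -> b 0 j <= b 0 i) ->
  (forall j k, 0 <= W j k) -> (forall j, \sum_k W j k <= 1) -> (forall k, \sum_j W j k <= 1) ->
  \sum_j \sum_k a 0 j * b 0 k * W j k <= \sum_i a 0 i * b 0 i.
Proof.
move=> a0 b0 ad bd W0 Wr Wc.
have := @ds_upper C (natf a) (natf b) (natW W) n (natf_dec a0 ad) (natf_dec b0 bd)
  (natf_out a (leqnn n)) (natf_out b (leqnn n)).
have W0' j k : 0 <= natW W j k.
  by rewrite /natW; case: insub => [j'|//]; case: insub => [k'|//].
have HP : forall j, (j < n)%N -> \sum_(k < n) natW W j k <= 1.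
  move=> j jn; rewrite -[j]/(val (Ordinal jn)).
  by under eq_bigr do rewrite natW_ord.
have HQ : forall k, (k < n)%N -> \sum_(j < n) natW W j k <= 1.
  move=> k kn; rewrite -[k]/(val (Ordinal kn)).
  by under eq_bigr do rewrite natW_ord.
move=> /(_ W0' HP HQ).
under eq_bigr do under eq_bigr do rewrite !natf_ord natW_ord.
by under [X in _ <= X -> _]eq_bigr do rewrite !natf_ord.
Qed.

Lemma ds_lower_ord n (a b : 'rV[C]_n) (W : 'I_n -> 'I_n -> C) :
  (forall i, 0 <= a 0 i) -> (forall i, 0 <= b 0 i) ->
  (forall i j : 'I_n, (i <= j)%N -> a 0 j <= a 0 i) ->
  (forall i j : 'I_n, (i <= j)%N -> b 0 j <= b 0 i) ->
  (forall j k, 0 <= W j k) -> (forall j, \sum_k W j k = 1) -> (forall k, \sum_j W j k = 1) ->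
  \sum_i a 0 i * b 0 (rev_ord i) <= \sum_j \sum_k a 0 j * b 0 k * W j k.
Proof.
move=> a0 b0 ad bd W0 Wr Wc.
have := @ds_lower C (natf a) (natf b) (natW W) n (natf_dec a0 ad) (natf_dec b0 bd)
  (natf_out a (leqnn n)) (natf_out b (leqnn n)).
have W0' j k : 0 <= natW W j k.
  by rewrite /natW; case: insub => [j'|//]; case: insub => [k'|//].
have HP : forall j, (j < n)%N -> \sum_(k < n) natW W j k = 1.
  move=> j jn; rewrite -[j]/(val (Ordinal jn)).
  by under eq_bigr do rewrite natW_ord.
have HQ : forall k, (k < n)%N -> \sum_(j < n) natW W j k = 1.
  move=> k kn; rewrite -[k]/(val (Ordinal kn)).
  by under eq_bigr do rewrite natW_ord.
move=> /(_ W0' HP HQ).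
under [X in _ <= X -> _]eq_bigr do under eq_bigr do rewrite !natf_ord natW_ord.
have nr (i : 'I_n) : natf b (n - i.+1) = b 0 (rev_ord i) by exact: (natf_ord b (rev_ord i)).
under [X in X <= _ -> _]eq_bigr => i _ do rewrite natf_ord nr.
by [].
Qed.

End Fin.


Section Al.
Variable C : numClosedFieldType.

Lemma fid_aligned n (rho sigma X Y0 : 'M[C]_n) (lam nu : 'rV[C]_n) :
  spec_of rho X lam -> spec_of sigma Y0 nu ->
  (X ^t* *m Y0) \is unitarymx /\
  fidelity rho ((X ^t* *m Y0) *m sigma *m (X ^t* *m Y0) ^t*) =
    \sum_i sqrtC (lam 0 i * nu 0 i).
Proof.
move=> sr ss; have sqr := msqrt_spec sr.
case: (sr) => Xu lam0 rE; case: (ss) => Y0u nu0 sE.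
split; first by apply: mul_unitarymx => //; rewrite unitary_adj.
have s' : (X ^t* *m Y0) *m sigma *m (X ^t* *m Y0) ^t* = X ^t* *m diag_mx nu *m X.
  rewrite sE adjM trmxCK !mulmxA -[X ^t* *m Y0 *m Y0 ^t*]mulmxA (unitarymxP Y0u) mulmx1.
  by rewrite -[X ^t* *m diag_mx nu *m Y0 *m Y0 ^t*]mulmxA (unitarymxP Y0u) mulmx1.
set c := \row_i (sqrtC (lam 0 i) * nu 0 i * sqrtC (lam 0 i)).
have c0 i : 0 <= c 0 i by rewrite mxE !mulr_ge0 ?sqrtC_ge0.
have sM : spec_of (msqrt rho *m ((X ^t* *m Y0) *m sigma *m (X ^t* *m Y0) ^t*) *m msqrt rho) X c.
  split => //; rewrite s' sqr !mulmxA.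
  rewrite -[X ^t* *m _ *m X *m X ^t*]mulmxA (unitarymxP Xu) mulmx1.
  rewrite -[X ^t* *m _ *m _ *m X *m X ^t*]mulmxA (unitarymxP Xu) mulmx1.
  rewrite -!mulmxA; congr (_ *m _); rewrite !mulmxA !diag_mul; congr (_ *m _); congr diag_mx.
  by apply/rowP => i; rewrite !mxE.
have sS : spec_of (msqrt (msqrt rho *m ((X ^t* *m Y0) *m sigma *m (X ^t* *m Y0) ^t*) *m msqrt rho)) X (sqrt_row c).
  by split => //; [move=> i; rewrite mxE sqrtC_ge0 | exact: msqrt_spec].
rewrite /fidelity (trace_spec sS); apply: eq_bigr => i _; rewrite !mxE.
congr sqrtC; rewrite mulrC mulrA -expr2 sqrtCK; ring.
Qed.

End Al.

Theorem theorem1 (C : numClosedFieldType) (d : nat) (hd : (1 <= d)%N)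
    (rho sigma : 'M[C]_d) :
  density rho -> density sigma ->
  ((forall U : 'M[C]_d, U \is unitarymx ->
      fidelity rho (U *m sigma *m U ^t*) <= cfidelity (eig_dec rho) (eig_dec sigma))
   /\ (exists2 U : 'M[C]_d, U \is unitarymx &
      fidelity rho (U *m sigma *m U ^t*) = cfidelity (eig_dec rho) (eig_dec sigma))
   /\ cfidelity (eig_dec rho) (eig_dec sigma)
        = \sum_(j < d) sqrtC ((eig_dec rho)`_j * (eig_dec sigma)`_j))
  /\
  ((forall U : 'M[C]_d, U \is unitarymx ->
      cfidelity (eig_dec rho) (eig_inc sigma) <= fidelity rho (U *m sigma *m U ^t*))
   /\ (exists2 U : 'M[C]_d, U \is unitarymx &
      fidelity rho (U *m sigma *m U ^t*) = cfidelity (eig_dec rho) (eig_inc sigma))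
   /\ cfidelity (eig_dec rho) (eig_inc sigma)
        = \sum_(j < d) sqrtC ((eig_dec rho)`_j * (eig_inc sigma)`_j)).
Proof.
move=> [rp _] [sp _].
have [P1 [l1 sp1]] := psd_spec rp; have [X [lam [sr ldec]]] := sort_spec sp1.
have [P2 [m2 sp2]] := psd_spec sp; have [Y0 [mu [ss mdec]]] := sort_spec sp2.
have er := eig_dec_spec sr ldec; have es := eig_dec_spec ss mdec.
rewrite /eig_inc er es.
case: (sr) => Xu lam0 _; case: (ss) => Y0u mu0 _.
set a := sqrt_row lam; set b := sqrt_row mu.
have a0 i : 0 <= a 0 i by rewrite mxE sqrtC_ge0.
have b0 i : 0 <= b 0 i by rewrite mxE sqrtC_ge0.
have adec (i j : 'I_d) : (i <= j)%N -> a 0 j <= a 0 i.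
  by move=> ij; rewrite !mxE ler_sqrtC ?ldec // nnegrE.
have bdec (i j : 'I_d) : (i <= j)%N -> b 0 j <= b 0 i.
  by move=> ij; rewrite !mxE ler_sqrtC ?mdec // nnegrE.
have cf1 : cfidelity (rowseq lam) (rowseq mu) = \sum_i a 0 i * b 0 i.
  rewrite /cfidelity size_rowseq; apply: eq_bigr => i _.
  by rewrite !rowseq_nth !mxE sqrtCM ?nnegrE.
have cf2 : cfidelity (rowseq lam) (rev (rowseq mu)) = \sum_i a 0 i * b 0 (rev_ord i).
  rewrite /cfidelity size_rowseq; apply: eq_bigr => i _.
  rewrite nth_rev ?size_rowseq // -[(d - i.+1)%N]/(val (rev_ord i)).
  by rewrite !rowseq_nth !mxE sqrtCM ?nnegrE.
split; (split; [|split]).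
- move=> U Uu; have [G [Z [s [Gu Zu s0 -> LL]]]] := fid_reduce sr ss Uu.
  have [W [W0 Wr Wc H]] := core_upper Gu Zu a0 b0 s0 LL.
  by rewrite cf1; apply: le_trans H _; apply: ds_upper_ord.
- have [Uu E] := fid_aligned sr ss.
  exists (X ^t* *m Y0) => //; rewrite E cf1; apply: eq_bigr => i _.
  by rewrite !mxE sqrtCM ?nnegrE.
- by rewrite /cfidelity size_rowseq.
- move=> U Uu; have [G [Z [s [Gu Zu s0 -> LL]]]] := fid_reduce sr ss Uu.
  rewrite cf2; apply: le_trans (core_lower Gu Zu a0 b0 s0 LL).
  apply: ds_lower_ord => //.
  + by move=> j k; rewrite exprn_ge0.
  + by move=> j; rewrite unitary_row_sum.
  + by move=> k; rewrite unitary_col_sum.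
- pose p : 'S_d := perm (@rev_ord_inj d).
  have [Uu E] := fid_aligned sr (spec_perm p ss).
  eexists; first exact: Uu.
  rewrite E cf2; apply: eq_bigr => i _.
  by rewrite !mxE permE sqrtCM ?nnegrE.
- by rewrite /cfidelity size_rowseq.
Qed.
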